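(* Let $A(x_1,x_2)=\begin{bmatrix}sx_1 & x_2\\ mx_1+nx_2 & -sx_1\end{bmatrix}$, $P(x_1,x_2,x_3,x_4)=\begin{bmatrix}tA(x_1,x_2) & A(x_3,x_4)\\ pA(x_1,x_2)+qA(x_3,x_4) & -tA(x_1,x_2)\end{bmatrix}$, and $f=\det P$, with $(m,n,p,q,s,t)=(-1,-4,1,-1,1,1)$. Then the quartic diophantine equation $f(x_1,x_2,x_3,x_4)=1$ has infinitely many solutions in positive integers (one of them being $(21,8,33,13)$). *)

(* Defs.v *)
From HB Require Import structures.
From mathcomp Require Import all_boot all_order all_algebra.
Set Implicit Arguments. Unset Strict Implicit. Unset Printing Implicit Defensive.
Import Order.TTheory GRing.Theory Num.Theory.
Local Open Scope ring_scope.

Definition Amx (m n s : int) (x1 x2 : int) : 'M[int]_2 :=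
  \matrix_(i < 2, j < 2)
    if i == 0 :> nat then (if j == 0 :> nat then s * x1 else x2)
    else (if j == 0 :> nat then m * x1 + n * x2 else - (s * x1)).

Definition Pmx (m n p q s t : int) (x1 x2 x3 x4 : int) : 'M[int]_(2 + 2) :=
  let A12 := Amx m n s x1 x2 in
  let A34 := Amx m n s x3 x4 in
  block_mx (t *: A12) A34 (p *: A12 + q *: A34) (- (t *: A12)).

Definition fpoly (m n p q s t : int) (x1 x2 x3 x4 : int) : int :=
  \det (Pmx m n p q s t x1 x2 x3 x4).

Definition f13 (x1 x2 x3 x4 : int) : int := fpoly (-1) (-4) 1 (-1) 1 1 x1 x2 x3 x4.

Definition is_pos_sol (x : int * int * int * int) : Prop :=
  let '(x1, x2, x3, x4) := x in
  [/\ 0 < x1, 0 < x2, 0 < x3 & 0 < x4] /\ f13 x1 x2 x3 x4 = 1.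

(* Main.v *)
Require Import Defs.
From mathcomp Require Import all_boot all_order all_algebra ring zify.
Import Order.TTheory GRing.Theory Num.Theory.
Local Open Scope ring_scope.

Lemma det4 (g : nat -> nat -> int) : \det (\matrix_(i < 4, j < 4) g i j) =
  0 + g 0%N 0%N*g 1%N 1%N*g 2%N 2%N*g 3%N 3%N
  - g 0%N 0%N*g 1%N 1%N*g 2%N 3%N*g 3%N 2%N
  - g 0%N 0%N*g 1%N 2%N*g 2%N 1%N*g 3%N 3%N
  + g 0%N 0%N*g 1%N 2%N*g 2%N 3%N*g 3%N 1%N
  + g 0%N 0%N*g 1%N 3%N*g 2%N 1%N*g 3%N 2%N
  - g 0%N 0%N*g 1%N 3%N*g 2%N 2%N*g 3%N 1%N
  - g 0%N 1%N*g 1%N 0%N*g 2%N 2%N*g 3%N 3%N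
  + g 0%N 1%N*g 1%N 0%N*g 2%N 3%N*g 3%N 2%N
  + g 0%N 1%N*g 1%N 2%N*g 2%N 0%N*g 3%N 3%N
  - g 0%N 1%N*g 1%N 2%N*g 2%N 3%N*g 3%N 0%N
  - g 0%N 1%N*g 1%N 3%N*g 2%N 0%N*g 3%N 2%N
  + g 0%N 1%N*g 1%N 3%N*g 2%N 2%N*g 3%N 0%N
  + g 0%N 2%N*g 1%N 0%N*g 2%N 1%N*g 3%N 3%N
  - g 0%N 2%N*g 1%N 0%N*g 2%N 3%N*g 3%N 1%N
  - g 0%N 2%N*g 1%N 1%N*g 2%N 0%N*g 3%N 3%N
  + g 0%N 2%N*g 1%N 1%N*g 2%N 3%N*g 3%N 0%N
  + g 0%N 2%N*g 1%N 3%N*g 2%N 0%N*g 3%N 1%N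
  - g 0%N 2%N*g 1%N 3%N*g 2%N 1%N*g 3%N 0%N
  - g 0%N 3%N*g 1%N 0%N*g 2%N 1%N*g 3%N 2%N
  + g 0%N 3%N*g 1%N 0%N*g 2%N 2%N*g 3%N 1%N
  + g 0%N 3%N*g 1%N 1%N*g 2%N 0%N*g 3%N 2%N
  - g 0%N 3%N*g 1%N 1%N*g 2%N 2%N*g 3%N 0%N
  - g 0%N 3%N*g 1%N 2%N*g 2%N 0%N*g 3%N 1%N
  + g 0%N 3%N*g 1%N 2%N*g 2%N 1%N*g 3%N 0%N.
Proof.
rewrite (expand_det_row _ ord0) !big_ord_recl big_ord0 /cofactor.
rewrite !(expand_det_row _ ord0) !big_ord_recl !big_ord0 /cofactor.
rewrite !(expand_det_row _ ord0) !big_ord_recl !big_ord0 /cofactor.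
rewrite !det_mx11 !mxE /= /bump /=.
ring.
Qed.

Definition Nf (a b : int) : int := a^+2 - a*b - 4*b^+2.
Definition Df (a b c d : int) : int := 2*a*c - (a*d + b*c) - 8*b*d.
Definition F (a b c d : int) : int :=
  let N1 := Nf a b in let N2 := Nf c d in let D := Df a b c d in
  N1^+2 + 3*N1*N2 + N2^+2 - D^+2 + D*N1 - D*N2.

Lemma f13E a b c d : f13 a b c d = F a b c d.
Proof.
rewrite /f13 /fpoly.
set M := Pmx _ _ _ _ _ _ _ _ _ _.
pose g (i j : nat) := M (@inord 3 i) (@inord 3 j).
have -> : M = \matrix_(i < 4, j < 4) g i j.
  by apply/matrixP => i j; rewrite [RHS]mxE /g !inord_val.
have e0 : (@inord 3 0 : 'I_(2+2)) = lshift 2 (0 : 'I_2) by apply: val_inj; rewrite /= inordK.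
have e1 : (@inord 3 1 : 'I_(2+2)) = lshift 2 (1 : 'I_2) by apply: val_inj; rewrite /= inordK.
have e2 : (@inord 3 2 : 'I_(2+2)) = rshift 2 (0 : 'I_2) by apply: val_inj; rewrite /= inordK.
have e3 : (@inord 3 3 : 'I_(2+2)) = rshift 2 (1 : 'I_2) by apply: val_inj; rewrite /= inordK.
rewrite det4 /g /M /Pmx e0 e1 e2 e3 !block_mxEul !block_mxEur !block_mxEdl !block_mxEdr /Amx.
rewrite !mxE /= /F /Nf /Df.
ring.
Qed.

Fixpoint sol (k : nat) : int * int * int * int :=
  match k with
  | 0%N => (21, 8, 33, 13)
  | k'.+1 => let '(a, b, c, d) := sol k' in
      (2705*a + 4224*b, 1056*a + 1649*b, 2705*c + 4224*d, 1056*c + 1649*d)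
  end.

Lemma solP k : let '(a, b, c, d) := sol k in
  [/\ 0 < a, 0 < b, 0 < c & 0 < d] /\ F a b c d = 1 /\ (k%:Z < a).
Proof.
elim: k => [|k]; first by split; [|split]; rewrite ?/F ?/Nf ?/Df //=.
rewrite /=; case: (sol k) => [[[a b] c] d] [[ha hb hc hd] [hF hk]].
split; first by split; lia.
split; last by lia.
rewrite -[RHS]hF /F /Nf /Df; ring.
Qed.

Theorem mainTheorem13 :
  is_pos_sol (21, 8, 33, 13) /\
  ~ (exists s : seq (int * int * int * int),
       forall x, is_pos_sol x -> x \in s).
Proof.
split.
  by rewrite /is_pos_sol f13E; have := solP 0; rewrite /=; case=> ? [? _].
case=> s hs.
pose Mx := \max_(y <- s) `|y.1.1.1|%N.
have := hs (sol Mx); have := solP Mx.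
case: (sol Mx) => [[[a b] c] d] [hpos [hF hk]] H.
have /H hin : is_pos_sol (a, b, c, d) by split; [exact: hpos | rewrite f13E].
have := @leq_bigmax_seq _ s xpredT (fun y : int * int * int * int => `|y.1.1.1|%N) _ hin isT.
rewrite -/Mx /= => hle.
lia.
Qed.
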